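(* For the pointed endofunctor $(T,t)$ on $\mathsf{cSet}$ defined below, there is a monad $(T_\infty,t_\infty,\mu)$ on $\mathsf{cSet}$ and a natural transformation $\eta:T\to T_\infty$ with $\eta\circ t=t_\infty$ such that the induced comparison functor from the category of $T_\infty$-algebras to the category of $(T,t)$-algebras, sending $(X,\psi)$ to $(X,\psi\circ\eta_X)$, is an isomorphism of categories.
   Context: Let $\mathbb{B}$ be the category of finite sets $[n]=\{\bot,x_1,\dots,x_n,\top\}$ ($n\ge0$, $\bot\ne\top$) and functions preserving $\bot,\top$; $\mathsf{cSet}$ is the category of presheaves on $\mathbb{B}^{op}$. $\mathrm{I}^n$ is the representable on $[n]$, $\mathrm{I}^n\cong\mathrm{I}\times\dots\times\mathrm{I}$, $\mathrm{I}=\mathrm{I}^1$; the two maps $[1]\to[0]$ give endpoints $0,1:1\to\mathrm{I}$. For $1\le i\le n$, $d\in\{0,1\}$, the face $\alpha_i^d:\mathrm{I}^{n-1}\to\mathrm{I}^n$ inserts $d$ in coordinate $i$; for $e\in\{0,1\}$ the open box $\sqcup^n_e\rightarrowtail\mathrm{I}^n$ is the union of the images of all faces $\alpha_i^d$ with $(i,d)\ne(1,e)$, with inclusion $i^n_e$. $T(X)$ is the pushout of \[ \textstyle\coprod_{n,e} X^{\sqcup^n_e}\times\mathrm{I}^n \xleftarrow{\ \coprod 1\times i^n_e\ } \coprod_{n,e}X^{\sqcup^n_e}\times\sqcup^n_e \xrightarrow{\ [\mathrm{eval}]\ } X, \] coproducts over $n\ge1$, $e\in\{0,1\}$, and $t_X:X\to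 T(X)$ is the pushout injection. A $(T,t)$-algebra is $(X,\phi)$ with $\phi:TX\to X$, $\phi t_X=1_X$; morphisms $h$ satisfy $h\phi=\psi T(h)$. $T_\infty$-algebras are the (Eilenberg–Moore) algebras of the monad. *)

(* Defs.v *)
From Stdlib Require Import Relations.Relation_Operators.
From Stdlib Require Import FunctionalExtensionality ProofIrrelevance PropExtensionality.
From HB Require Import structures.
From mathcomp Require Import all_boot.

Set Implicit Arguments.
Unset Strict Implicit.
Unset Printing Implicit Defensive.

(* [n] = {bot, x_1, ..., x_n, top} is encoded as 'I_n.+2 with          *)
(*   0 = bot, i = x_i (1 <= i <= n), n.+1 = top.                       *)
(* A map [n] -> [m] preserving bot and top is determined by the images *)
(* of x_1..x_n; we store it as f : {ffun 'I_n -> 'I_m.+2}, where f i   *)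
(* is the image of x_(i+1).  bext f : 'I_n.+2 -> 'I_m.+2 is the whole  *)
(* bot/top-preserving function.                                        *)

Definition bhom (n m : nat) : Type := {ffun 'I_n -> 'I_m.+2}.

Definition bext m k (g : bhom m k) (v : 'I_m.+2) : 'I_k.+2 :=
  if val v == 0 then ord0 else
  match insub (val v).-1 with Some j => g j | None => ord_max end.

Definition bcomp n m k (g : bhom m k) (f : bhom n m) : bhom n k :=
  [ffun i => bext g (f i)].

Definition bid n : bhom n n := [ffun i : 'I_n => inord i.+1].

Lemma bext_bot m k (g : bhom m k) : bext g ord0 = ord0.
Proof. by rewrite /bext /=. Qed.

Lemma bext_top m k (g : bhom m k) : bext g ord_max = ord_max.
Proof.
rewrite /bext /=; case: insubP => // j; rewrite /= ltnn //.
Qed.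

Lemma bext_id m (v : 'I_m.+2) : bext (bid m) v = v.
Proof.
rewrite /bext; case: v => [[|v] Hv] //=.
  by apply: val_inj.
case: insubP => [j Hj Ej|Hj] /=.
  by rewrite ffunE; apply: val_inj; rewrite /= inordK Ej.
apply: val_inj => /=; move: Hv Hj; rewrite !ltnS -leqNgt => H1 H2.
by apply/eqP; rewrite eqSS eqn_leq H1 H2.
Qed.

Lemma bext_comp n m k (g : bhom m k) (f : bhom n m) (v : 'I_n.+2) :
  bext (bcomp g f) v = bext g (bext f v).
Proof.
have -> : bext f v = if val v == 0 then ord0 else
  match insub (val v).-1 with Some j => f j | None => ord_max end by [].
rewrite /bext; case: eqP => [_|_] /=; first by [].
case: insubP => [j _ _|_]; first by rewrite ffunE.
exact: (esym (bext_top g)).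
Qed.

Lemma bcomp_idl n m (f : bhom n m) : bcomp (bid m) f = f.
Proof. by apply/ffunP => i; rewrite ffunE bext_id. Qed.

Lemma bcomp_idr n m (g : bhom n m) : bcomp g (bid n) = g.
Proof.
apply/ffunP => i; rewrite !ffunE /bext /= inordK; last by rewrite !ltnS ltnW.
case: insubP => [j _ Ej|]; last by rewrite /= ltn_ord.
by congr (g _); apply: val_inj.
Qed.

Lemma bcomp_assoc n m k l (h : bhom k l) (g : bhom m k) (f : bhom n m) :
  bcomp h (bcomp g f) = bcomp (bcomp h g) f.
Proof. by apply/ffunP => i; rewrite !ffunE bext_comp. Qed.

(* cSet = presheaves on B^op = covariant functors B -> Type.           *)

Unset Implicit Arguments.
Record cset := CSet {
  cob :> nat -> Type;
  cmap : forall n m, bhom n m -> cob n -> cob m;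
  cmap_id : forall n (x : cob n), cmap n n (bid n) x = x;
  cmap_comp : forall n m k (g : bhom m k) (f : bhom n m) (x : cob n),
      cmap n k (bcomp g f) x = cmap m k g (cmap n m f x) }.

Arguments cmap c {n m} _ _.

Record nt (X Y : cset) := NT {
  ntf :> forall n, X n -> Y n;
  ntnat : forall n m (f : bhom n m) (x : X n),
      ntf m (cmap X f x) = cmap Y f (ntf n x) }.

Arguments ntf {X Y} _ _ _.
Arguments NT {X Y} _ _.
Set Implicit Arguments.

Definition nt_eq (X Y : cset) (a b : nt X Y) : Prop :=
  forall n (x : X n), a n x = b n x.

Lemma nt_ext (X Y : cset) (a b : nt X Y) : nt_eq a b -> a = b.
Proof.
case: a => a Ha; case: b => b Hb /= E.
have Eab : a = b.
  by apply: functional_extensionality_dep => n; apply: functional_extensionality => x; apply: E.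
subst b; congr NT; apply: proof_irrelevance.
Qed.

Definition ntid (X : cset) : nt X X := @NT X X (fun n x => x) (fun _ _ _ _ => erefl).

Definition ntcomp (X Y Z : cset) (g : nt Y Z) (f : nt X Y) : nt X Z.
Proof.
refine (@NT X Z (fun n x => g n (f n x)) _).
by move=> n m h x; rewrite ntnat ntnat.
Defined.

Definition yo (n : nat) : cset.
Proof.
refine (@CSet (fun m => bhom n m) (fun m m' f g => bcomp f g) _ _).
- by move=> m g; rewrite bcomp_idl.
- by move=> m m' k g f x; rewrite bcomp_assoc.
Defined.

Definition cprod (A B : cset) : cset.
Proof.
refine (@CSet (fun m => (A m * B m)%type)
  (fun m m' f p => (cmap A f p.1, cmap B f p.2)) _ _).
- by move=> m [a b]; rewrite /= !cmap_id.
- by move=> m m' k g f [a b]; rewrite /= !cmap_comp.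
Defined.

Definition prod_yo_map (A : cset) m m' (f : bhom m m') :
  nt (cprod A (yo m')) (cprod A (yo m)).
Proof.
refine (@NT (cprod A (yo m')) (cprod A (yo m)) (fun k p => (p.1, bcomp p.2 f)) _).
by move=> k k' h [a g]; rewrite /= bcomp_assoc.
Defined.

Definition cexp (A X : cset) : cset.
Proof.
refine (@CSet (fun m => nt (cprod A (yo m)) X)
  (fun m m' f phi => ntcomp phi (prod_yo_map A f)) _ _).
- by move=> m phi; apply: nt_ext => k [a g] /=; rewrite bcomp_idr.
- by move=> m m' k g f phi; apply: nt_ext => l [a h] /=; rewrite bcomp_assoc.
Defined.

Definition ceval (A X : cset) m (phi : cexp A X m) (a : A m) : X m :=
  phi m (a, bid m).

(* For n = k.+1, coordinates 1..n are indexed by i : 'I_k.+1 (i = 0 is *)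
(* coordinate 1).  The face alpha_i^d : I^k -> I^(k+1) is induced (by  *)
(* Yoneda) by the B-map face i d : [k+1] -> [k] sending x_(i+1) to the *)
(* endpoint d (bot for d = false, i.e. 0; top for d = true, i.e. 1) and *)
(* the other x_j's order-preservingly onto x_1..x_k.                   *)

Definition face k (i : 'I_k.+1) (d : bool) : bhom k.+1 k :=
  [ffun j : 'I_k.+1 => if j == i then (if d then ord_max else ord0)
                       else if (j < i)%N then inord j.+1 else inord j].

Definition alpha k (i : 'I_k.+1) (d : bool) m (y : bhom k m) : bhom k.+1 m :=
  bcomp y (face i d).

Definition in_box k (e : bool) m (g : bhom k.+1 m) : bool :=
  [exists i : 'I_k.+1, exists d : bool,
     ((i != ord0) || (d != e)) && [exists y : bhom k m, g == alpha i d y]].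

Lemma in_box_comp k e m m' (f : bhom m m') (g : bhom k.+1 m) :
  in_box e g -> in_box e (bcomp f g).
Proof.
case/existsP=> i /existsP [d /andP [Hid /existsP [y /eqP Hy]]].
apply/existsP; exists i; apply/existsP; exists d; rewrite Hid /=.
by apply/existsP; exists (bcomp f y); rewrite Hy /alpha bcomp_assoc.
Qed.

Definition box (k : nat) (e : bool) : cset.
Proof.
refine (@CSet (fun m => {g : bhom k.+1 m | in_box e g})
  (fun m m' f g => exist _ (bcomp f (val g)) (in_box_comp f (valP g))) _ _).
- by move=> m g; apply: val_inj; rewrite /= bcomp_idl.
- by move=> m m' l g f x; apply: val_inj; rewrite /= bcomp_assoc.
Defined.

Definition quot (A : Type) (R : A -> A -> Prop) : Type :=
  {P : A -> Prop | exists a, P = clos_refl_sym_trans A R a}.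

Definition qcls (A : Type) (R : A -> A -> Prop) (a : A) : quot R :=
  exist _ (clos_refl_sym_trans A R a) (ex_intro _ a erefl).

Lemma quot_eq (A : Type) (R : A -> A -> Prop) (q1 q2 : quot R) :
  sval q1 = sval q2 -> q1 = q2.
Proof.
case: q1 => P1 H1; case: q2 => P2 H2 /= E; subst P2.
by congr exist; apply: proof_irrelevance.
Qed.

Lemma qsurj (A : Type) (R : A -> A -> Prop) (q : quot R) :
  exists a, q = qcls R a.
Proof. by case: q => P [a Ha]; exists a; apply: quot_eq. Qed.

Lemma crst_map (A B : Type) (R : A -> A -> Prop) (S : B -> B -> Prop)
  (f : A -> B) (Hf : forall a a', R a a' -> clos_refl_sym_trans B S (f a) (f a'))
  a a' : clos_refl_sym_trans A R a a' ->
         clos_refl_sym_trans B S (f a) (f a').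
Proof.
elim=> [x y /Hf //|x|x y _ IH|x y z _ IH1 _ IH2].
- exact: rst_refl.
- exact: rst_sym.
- exact: rst_trans IH2.
Qed.

Lemma qmap_wf (A B : Type) (R : A -> A -> Prop) (S : B -> B -> Prop)
  (f : A -> B) (Hf : forall a a', R a a' -> clos_refl_sym_trans B S (f a) (f a'))
  (P : A -> Prop) : (exists a, P = clos_refl_sym_trans A R a) ->
  exists b0, (fun b => exists a, P a /\ clos_refl_sym_trans B S (f a) b)
             = clos_refl_sym_trans B S b0.
Proof.
case=> a0 ->; exists (f a0).
apply: functional_extensionality => b; apply: propositional_extensionality; split.
- case=> a [Ha Hb]; apply: rst_trans Hb; exact: crst_map Ha.
- by move=> Hb; exists a0; split => //; exact: rst_refl.
Qed.

Definition qmap (A B : Type) (R : A -> A -> Prop) (S : B -> B -> Prop)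
  (f : A -> B) (Hf : forall a a', R a a' -> clos_refl_sym_trans B S (f a) (f a'))
  (q : quot R) : quot S :=
  exist _ (fun b => exists a, sval q a /\ clos_refl_sym_trans B S (f a) b)
    (qmap_wf Hf (svalP q)).

Lemma qmap_cls (A B : Type) (R : A -> A -> Prop) (S : B -> B -> Prop)
  (f : A -> B) Hf (a : A) : @qmap A B R S f Hf (qcls R a) = qcls S (f a).
Proof.
apply: quot_eq => /=; apply: functional_extensionality => b.
apply: propositional_extensionality; split.
- case=> a' [Ha Hb]; apply: rst_trans Hb; exact: crst_map Ha.
- by move=> Hb; exists a; split => //; exact: rst_refl.
Qed.

(* T(X) is the pushout of                                              *)
(*   coprod_{n,e} X^(box n e) x I^n  <-  coprod_{n,e} X^(box n e) x box n e  -> X *)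
(* (n = k.+1 >= 1, e : bool), computed levelwise as a quotient of      *)
(* X(m) + coprod_{k,e} (X^(box k.+1 e))(m) x I^(k+1)(m).               *)

Definition Tpre (X : cset) (m : nat) : Type :=
  (X m + {k : nat & {e : bool & (cexp (box k e) X m * bhom k.+1 m)%type}})%type.

Inductive Trel (X : cset) (m : nat) : Tpre X m -> Tpre X m -> Prop :=
| Tglue k e (phi : cexp (box k e) X m) (b : box k e m) :
    Trel (inl (ceval phi b)) (inr (existT _ k (existT _ e (phi, val b)))).

Definition Tpre_map (X : cset) m m' (f : bhom m m') (p : Tpre X m) : Tpre X m' :=
  match p with
  | inl x => inl (cmap X f x)
  | inr (existT k (existT e (phi, g))) =>
      inr (existT _ k (existT _ e (cmap (cexp (box k e) X) f phi, bcomp f g)))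
  end.

Lemma ceval_nat (X : cset) k e m m' (f : bhom m m')
  (phi : cexp (box k e) X m) (b : box k e m) :
  ceval (cmap (cexp (box k e) X) f phi) (cmap (box k e) f b)
  = cmap X f (ceval phi b).
Proof.
rewrite /ceval -(@ntnat _ _ phi) /=.
by rewrite bcomp_idl bcomp_idr.
Qed.

Lemma Tpre_map_resp (X : cset) m m' (f : bhom m m') (p p' : Tpre X m) :
  Trel p p' ->
  clos_refl_sym_trans _ (@Trel X m') (Tpre_map f p) (Tpre_map f p').
Proof.
case=> k e phi b /=; rewrite -ceval_nat.
apply: rst_step; exact: (Tglue (cmap (cexp (box k e) X) f phi) (cmap (box k e) f b)).
Qed.

Definition Tob (X : cset) : cset.
Proof.
refine (@CSet (fun m => quot (@Trel X m))
  (fun m m' f q => qmap (@Tpre_map_resp X m m' f) q) _ _).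
- move=> m q; case: (qsurj q) => a ->; rewrite qmap_cls; congr qcls.
  case: a => [x|[k [e [phi g]]]]; rewrite /Tpre_map; first by rewrite cmap_id.
  by rewrite (cmap_id (cexp (box k e) X) _ phi) bcomp_idl.
- move=> m m' l g f q; case: (qsurj q) => a ->; rewrite !qmap_cls; congr qcls.
  case: a => [x|[k [e [phi h]]]]; rewrite /Tpre_map; first by rewrite cmap_comp.
  by rewrite (cmap_comp (cexp (box k e) X) _ _ _ g f phi) bcomp_assoc.
Defined.

Definition tunit (X : cset) : nt X (Tob X).
Proof.
refine (@NT X (Tob X) (fun m x => qcls (@Trel X m) (inl x)) _).
by move=> n m f x /=; rewrite qmap_cls.
Defined.

Definition Tpre_hmap (X Y : cset) (h : nt X Y) m (p : Tpre X m) : Tpre Y m :=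
  match p with
  | inl x => inl (h m x)
  | inr (existT k (existT e (phi, g))) =>
      inr (existT _ k (existT _ e ((ntcomp h phi : cexp (box k e) Y m), g)))
  end.

Lemma Tpre_hmap_resp (X Y : cset) (h : nt X Y) m (p p' : Tpre X m) :
  Trel p p' ->
  clos_refl_sym_trans _ (@Trel Y m) (Tpre_hmap h p) (Tpre_hmap h p').
Proof.
case=> k e phi b /=; apply: rst_step.
exact: (Tglue (ntcomp h phi : cexp (box k e) Y m) b).
Qed.

Definition Tmap (X Y : cset) (h : nt X Y) : nt (Tob X) (Tob Y).
Proof.
refine (@NT (Tob X) (Tob Y) (fun m q => qmap (@Tpre_hmap_resp X Y h m) q) _).
move=> n m f q; case: (qsurj q) => a ->; rewrite /= !qmap_cls; congr qcls.
case: a => [x|[k [e [phi g]]]] /=; first by rewrite ntnat.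
have -> : ntcomp h (cmap (cexp (box k e) X) f phi)
          = cmap (cexp (box k e) Y) f (ntcomp h phi) by apply: nt_ext.
by [].
Defined.

Record endofunctor := Endofunctor {
  F0 :> cset -> cset;
  F1 : forall X Y : cset, nt X Y -> nt (F0 X) (F0 Y);
  F1_id : forall X : cset, nt_eq (F1 (ntid X)) (ntid (F0 X));
  F1_comp : forall (X Y Z : cset) (g : nt Y Z) (f : nt X Y),
      nt_eq (F1 (ntcomp g f)) (ntcomp (F1 g) (F1 f)) }.

Record monad := Monad {
  mfun :> endofunctor;
  munit : forall X : cset, nt X (mfun X);
  mmult : forall X : cset, nt (mfun (mfun X)) (mfun X);
  munit_nat : forall (X Y : cset) (h : nt X Y),
      nt_eq (ntcomp (F1 mfun h) (munit X)) (ntcomp (munit Y) h);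
  mmult_nat : forall (X Y : cset) (h : nt X Y),
      nt_eq (ntcomp (F1 mfun h) (mmult X))
            (ntcomp (mmult Y) (F1 mfun (F1 mfun h)));
  mmult_unitl : forall X : cset,
      nt_eq (ntcomp (mmult X) (munit (mfun X))) (ntid (mfun X));
  mmult_unitr : forall X : cset,
      nt_eq (ntcomp (mmult X) (F1 mfun (munit X))) (ntid (mfun X));
  mmult_assoc : forall X : cset,
      nt_eq (ntcomp (mmult X) (F1 mfun (mmult X)))
            (ntcomp (mmult X) (mmult (mfun X))) }.

Definition Talg (X : cset) (phi : nt (Tob X) X) : Prop :=
  nt_eq (ntcomp phi (tunit X)) (ntid X).

Definition Talg_hom (X Y : cset) (phi : nt (Tob X) X) (psi : nt (Tob Y) Y)
  (h : nt X Y) : Prop :=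
  nt_eq (ntcomp h phi) (ntcomp psi (Tmap h)).

Definition EMalg (M : monad) (X : cset) (psi : nt (M X) X) : Prop :=
  nt_eq (ntcomp psi (munit M X)) (ntid X) /\
  nt_eq (ntcomp psi (F1 M psi)) (ntcomp psi (mmult M X)).

Definition EMalg_hom (M : monad) (X Y : cset) (psi : nt (M X) X)
  (psi' : nt (M Y) Y) (h : nt X Y) : Prop :=
  nt_eq (ntcomp h psi) (ntcomp psi' (F1 M h)).

(* The comparison functor EM(M) -> (T,t)-Alg, (X, psi) |-> (X, psi o eta_X),
   h |-> h, is an isomorphism of categories.  Since it commutes with the
   forgetful functors to cSet, this amounts to:
   - bijectivity on objects: for each X, psi |-> psi o eta_X is a bijection
     from M-algebra structures on X onto (T,t)-algebra structures on X;
   - bijectivity on hom-sets: injectivity (faithfulness) is automatic since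
     h |-> h; fullness says every (T,t)-algebra morphism between the images
     is an M-algebra morphism. *)
Definition comparison_is_iso (M : monad) (eta : forall X : cset, nt (Tob X) (M X))
  : Prop :=
  (forall (X : cset) (phi : nt (Tob X) X), Talg phi ->
     exists psi : nt (M X) X, EMalg psi /\ nt_eq (ntcomp psi (eta X)) phi) /\
  (forall (X : cset) (psi psi' : nt (M X) X), EMalg psi -> EMalg psi' ->
     nt_eq (ntcomp psi (eta X)) (ntcomp psi' (eta X)) -> nt_eq psi psi') /\
  (forall (X Y : cset) (psi : nt (M X) X) (psi' : nt (M Y) Y) (h : nt X Y),
     EMalg psi -> EMalg psi' ->
     Talg_hom (ntcomp psi (eta X)) (ntcomp psi' (eta Y)) h ->
     EMalg_hom psi psi' h).

(* Main.v *)
From Stdlib Require Import Relations.Relation_Operators.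
From Stdlib Require Import FunctionalExtensionality ProofIrrelevance PropExtensionality ClassicalEpsilon.
From HB Require Import structures.
From mathcomp Require Import all_boot.
Require Import Defs.

Set Implicit Arguments.
Unset Strict Implicit.
Unset Printing Implicit Defensive.

Lemma qcls_eq (A : Type) (R : A -> A -> Prop) a b : R a b -> qcls R a = qcls R b.
Proof.
move=> H; apply: quot_eq => /=.
apply: functional_extensionality => x; apply: propositional_extensionality; split=> Hx.
- apply: rst_trans Hx; apply: rst_sym; exact: rst_step.
- apply: rst_trans Hx; exact: rst_step.
Qed.

Lemma qcls_crst (A : Type) (R : A -> A -> Prop) a b :
  qcls R a = qcls R b -> clos_refl_sym_trans A R a b.
Proof.
move=> E; have : sval (qcls R b) b by apply: rst_refl.
by rewrite -E.
Qed.

Definition qrep (A : Type) (R : A -> A -> Prop) (q : quot R) : A :=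
  proj1_sig (constructive_indefinite_description _ (qsurj q)).

Lemma qrepK (A : Type) (R : A -> A -> Prop) (q : quot R) : qcls R (qrep q) = q.
Proof.
rewrite /qrep; case: constructive_indefinite_description => a /= -> //.
Qed.

Lemma crst_resp (A B : Type) (R : A -> A -> Prop) (f : A -> B) :
  (forall a b, R a b -> f a = f b) ->
  forall a b, clos_refl_sym_trans A R a b -> f a = f b.
Proof.
move=> H a b; elim.
- by move=> x y /H.
- by [].
- by move=> x y _ ->.
- by move=> x y z _ -> _ ->.
Qed.

Definition qlift (A B : Type) (R : A -> A -> Prop) (f : A -> B) (q : quot R) : B :=
  f (qrep q).

Lemma qlift_cls (A B : Type) (R : A -> A -> Prop) (f : A -> B) :
  (forall a b, R a b -> f a = f b) -> forall a, qlift f (qcls R a) = f a.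
Proof.
move=> H a; rewrite /qlift; apply: (crst_resp H); apply: qcls_crst; exact: qrepK.
Qed.

Lemma Tmap_id (X : cset) : nt_eq (Tmap (ntid X)) (ntid (Tob X)).
Proof.
move=> m q; case: (qsurj q) => p ->; rewrite /= qmap_cls; congr qcls.
case: p => [x|[k [e [phi g]]]] //=.
by have -> : ntcomp (ntid X) phi = phi by apply: nt_ext.
Qed.

Lemma Tmap_comp (X Y Z : cset) (g : nt Y Z) (f : nt X Y) :
  nt_eq (Tmap (ntcomp g f)) (ntcomp (Tmap g) (Tmap f)).
Proof.
move=> m q; case: (qsurj q) => p ->; rewrite /= !qmap_cls; congr qcls.
case: p => [x|[k [e [phi h]]]] //=.
by have -> : ntcomp (ntcomp g f) phi = ntcomp g (ntcomp f phi) by apply: nt_ext.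
Qed.

Lemma Tmap_t (X Y : cset) (h : nt X Y) m x : Tmap h m (tunit X m x) = tunit Y m (h m x).
Proof. by rewrite /= qmap_cls. Qed.

Lemma Tmap_ext (X Y : cset) (f g : nt X Y) : nt_eq f g -> nt_eq (Tmap f) (Tmap g).
Proof. by move=> /nt_ext ->. Qed.

Record alg := Alg { acar : cset; aop : nt (Tob acar) acar; alaw : Talg aop }.

Definition natF (B A : cset) (F : forall m, B m -> A m) : Prop :=
  forall n m (f : bhom n m) x, F m (cmap B f x) = cmap A f (F n x).

Lemma in_box0 k e m :
  in_box e (alpha (ord0 : 'I_k.+1) (~~ e) ([ffun _ => ord0] : bhom k m)).
Proof.
apply/existsP; exists ord0; apply/existsP; exists (~~ e); apply/andP; split.
  by case: e.
by apply/existsP; eexists; exact: eqxx.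
Qed.

Definition b0 k e m : box k e m :=
  @exist _ (fun g => in_box e g) _ (in_box0 k e m).

Section Free.
Variable X : cset.

Inductive term : nat -> Type :=
| tvar m : X m -> term m
| tfill m k e : (forall m', cprod (box k e) (yo m) m' -> term m') -> bhom k.+1 m -> term m.

Definition Tinr (A : cset) m k e (phi : cexp (box k e) A m) (g : bhom k.+1 m) : Tob A m :=
  qcls (@Trel A m) (inr (existT _ k (existT _ e (phi, g)))).

Fixpoint interp (A : alg) (v : nt X (acar A)) m (t : term m) {struct t} : acar A m :=
  match t with
  | tvar m x => v m x
  | @tfill m k e args g =>
    let F := fun m' p => interp v (args m' p) in
    match excluded_middle_informative (natF F) with
    | left H => aop A m (Tinr (NT F H) g)
    | right _ => F m (b0 k e m, bid m)
    end
  end.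

Inductive good : forall m, term m -> Prop :=
| good_var m (x : X m) : good (tvar x)
| good_fill m k e (args : forall m', cprod (box k e) (yo m) m' -> term m') g :
    (forall m' p, good (args m' p)) ->
    (forall (A : alg) (v : nt X (acar A)), natF (fun m' p => interp v (args m' p))) ->
    good (tfill args g).

Lemma interp_fill (A : alg) (v : nt X (acar A)) m k e
  (args : forall m', cprod (box k e) (yo m) m' -> term m') g
  (H : natF (fun m' p => interp v (args m' p))) :
  interp v (tfill args g) = aop A m (Tinr (NT _ H) g).
Proof.
rewrite /=; case: excluded_middle_informative => [H'|//].
by rewrite (proof_irrelevance _ H' H).
Qed.

Definition tmap m m' (f : bhom m m') (t : term m) : term m' :=
  match t in term m0 return bhom m0 m' -> term m' with
  | tvar m x => fun f => tvar (cmap X f x)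
  | @tfill m k e args g => fun f =>
      tfill (fun m'' (p : cprod (box k e) (yo m') m'') => args m'' (p.1, bcomp p.2 f))
            (bcomp f g)
  end f.

Lemma natF_restr (A : cset) m m' k e (f : bhom m m')
  (F : forall m'', cprod (box k e) (yo m) m'' -> A m'') :
  natF F -> natF (fun m'' (p : cprod (box k e) (yo m') m'') => F m'' (p.1, bcomp p.2 f)).
Proof.
move=> H n n' h [b g] /=; rewrite -H /=; congr (F _ (_, _)).
by rewrite bcomp_assoc.
Qed.

Lemma good_tmap m m' (f : bhom m m') (t : term m) : good t -> good (tmap f t).
Proof.
move=> Ht; case: Ht f => [m0 x|m0 k e args g Ha Hn] f /=; first by constructor.
constructor; first by move=> m'' p; apply: Ha.
by move=> A v; apply: (natF_restr f (Hn A v)).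
Qed.

Lemma interp_tmap (A : alg) (v : nt X (acar A)) m m' (f : bhom m m') (t : term m) :
  good t -> interp v (tmap f t) = cmap (acar A) f (interp v t).
Proof.
move=> Ht; case: Ht f => [m0 x|m0 k e args g Ha Hn] f /=; first by rewrite ntnat.
have := interp_fill (args := fun m'' (p : cprod (box k e) (yo m') m'') => args m'' (p.1, bcomp p.2 f)) (bcomp f g) (natF_restr f (Hn A v)).
move=> /= ->.
have := interp_fill g (Hn A v); move=> /= ->.
rewrite -ntnat /Tinr /= qmap_cls /=; congr (aop A _ (qcls _ (inr _))).
do 2 congr existT; congr pair; by apply: nt_ext.
Qed.


Definition G m := {t : term m | good t}.
Definition RG m (s t : G m) : Prop :=
  forall (A : alg) (v : nt X (acar A)), interp v (proj1_sig s) = interp v (proj1_sig t).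

Lemma RG_crst m (s t : G m) : clos_refl_sym_trans _ (@RG m) s t -> RG s t.
Proof.
elim=> //.
- by move=> x y _ H A v; rewrite H.
- by move=> x y z _ H1 _ H2 A v; rewrite H1 H2.
Qed.

Lemma qcls_RG m (s t : G m) : qcls (@RG m) s = qcls (@RG m) t -> RG s t.
Proof. by move=> E; apply: RG_crst; apply: qcls_crst E. Qed.

Definition tmapG m m' (f : bhom m m') (s : G m) : G m' :=
  exist _ (tmap f (proj1_sig s)) (good_tmap f (proj2_sig s)).

Lemma tmapG_resp m m' (f : bhom m m') (s t : G m) :
  RG s t -> clos_refl_sym_trans _ (@RG m') (tmapG f s) (tmapG f t).
Proof.
move=> H; apply: rst_step => A v /=.
by rewrite (interp_tmap _ _ (proj2_sig s)) (interp_tmap _ _ (proj2_sig t)) H.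
Qed.

Definition MX : cset.
Proof.
refine (@CSet (fun m => quot (@RG m))
  (fun m m' f q => qmap (@tmapG_resp m m' f) q) _ _).
- move=> m q; case: (qsurj q) => s ->; rewrite qmap_cls; apply: qcls_eq => A v /=.
  by rewrite (interp_tmap _ _ (proj2_sig s)) cmap_id.
- move=> m m' l g f q; case: (qsurj q) => s ->; rewrite !qmap_cls; apply: qcls_eq => A v /=.
  rewrite (interp_tmap _ _ (proj2_sig s)) (interp_tmap _ _ (good_tmap _ (proj2_sig s))).
  by rewrite (interp_tmap _ _ (proj2_sig s)) cmap_comp.
Defined.

Lemma MX_map m m' (f : bhom m m') (s : G m) :
  cmap MX f (qcls (@RG m) s) = qcls (@RG m') (tmapG f s).
Proof. by rewrite /= qmap_cls. Qed.

Definition interpQ (A : alg) (v : nt X (acar A)) m (q : MX m) : acar A m :=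
  interp v (proj1_sig (qrep q)).

Lemma interpQ_cls (A : alg) (v : nt X (acar A)) m (s : G m) :
  interpQ v (qcls (@RG m) s) = interp v (proj1_sig s).
Proof. by rewrite /interpQ; apply: qcls_RG; rewrite qrepK. Qed.

Lemma interpQ_nat (A : alg) (v : nt X (acar A)) : natF (interpQ v).
Proof.
move=> n m f q; case: (qsurj q) => s ->; rewrite MX_map !interpQ_cls /=.
by rewrite (interp_tmap _ _ (proj2_sig s)).
Qed.

Definition ext (A : alg) (v : nt X (acar A)) : nt MX (acar A) := NT _ (interpQ_nat v).

Definition unitG m (x : X m) : G m := exist _ (tvar x) (good_var x).

Lemma unit_nat n m (f : bhom n m) (x : X n) :
  qcls (@RG m) (unitG (cmap X f x)) = cmap MX f (qcls (@RG n) (unitG x)).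
Proof. by rewrite MX_map; apply: qcls_eq. Qed.

Definition unitX : nt X MX := @NT X MX (fun m x => qcls (@RG m) (unitG x)) unit_nat.

Lemma ext_unit (A : alg) (v : nt X (acar A)) : nt_eq (ntcomp (ext v) unitX) v.
Proof. by move=> m x; rewrite /= interpQ_cls. Qed.


Definition reps m k e (phi : cexp (box k e) MX m) :
  forall m', cprod (box k e) (yo m) m' -> term m' :=
  fun m' p => proj1_sig (qrep (phi m' p)).
Arguments reps {m k e} phi m' p.

Lemma reps_nat m k e (phi : cexp (box k e) MX m) (A : alg) (v : nt X (acar A)) :
  natF (fun m' p => interp v (reps phi m' p)).
Proof.
move=> n n' f p; rewrite /reps (@ntnat _ _ phi).
exact: (@interpQ_nat A v _ _ f (phi n p)).
Qed.

Lemma reps_good m k e (phi : cexp (box k e) MX m) g : good (tfill (reps phi) g).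
Proof.
constructor; first by move=> m' p; exact: proj2_sig (qrep _).
exact: reps_nat.
Qed.

Definition algfill m k e (phi : cexp (box k e) MX m) g : G m :=
  exist _ (tfill (reps phi) g) (reps_good phi g).

Lemma interp_algfill (A : alg) (v : nt X (acar A)) m k e (phi : cexp (box k e) MX m) g :
  interp v (proj1_sig (algfill phi g)) = aop A m (Tinr (ntcomp (ext v) phi) g).
Proof.
rewrite /=; case: excluded_middle_informative => [H|nH]; last first.
  by case: nH; apply: reps_nat.
by congr (aop A m (Tinr _ g)); apply: nt_ext.
Qed.

Lemma alg_box (A : alg) m k e (psi : cexp (box k e) (acar A) m) (b : box k e m) :
  aop A m (Tinr psi (proj1_sig b)) = psi m (b, bid m).
Proof.
rewrite /Tinr -(qcls_eq (Tglue psi b)).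
have := @alaw A m (ceval psi b); rewrite /= => ->.
by [].
Qed.

Definition algpre m (p : Tpre MX m) : MX m :=
  match p with
  | inl q => q
  | inr (existT k (existT e (phi, g))) => qcls (@RG m) (algfill phi g)
  end.

Lemma algpre_resp m (p p' : Tpre MX m) : Trel p p' -> algpre p = algpre p'.
Proof.
case=> k e phi b /=.
rewrite -[ceval phi b]qrepK; apply: qcls_eq => A v.
rewrite interp_algfill alg_box //.
Qed.

Lemma algX_nat : natF (fun m (q : Tob MX m) => qlift (@algpre m) q).
Proof.
move=> n m f q; case: (qsurj q) => p ->; rewrite /= qmap_cls.
rewrite !(qlift_cls (@algpre_resp _)).
case: p => [q'|[k [e [phi g]]]] //=.
rewrite qmap_cls; apply: qcls_eq => A v.
rewrite interp_algfill /tmapG /=.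
by [].
Qed.

Definition algX : nt (Tob MX) MX := @NT (Tob MX) MX _ algX_nat.

Lemma algX_law : Talg algX.
Proof. by move=> m q; rewrite /= (qlift_cls (@algpre_resp _)). Qed.


Lemma ext_hom (A : alg) (v : nt X (acar A)) : Talg_hom algX (aop A) (ext v).
Proof.
move=> m q; case: (qsurj q) => p ->.
rewrite /= (qlift_cls (@algpre_resp _)) qmap_cls.
case: p => [q'|[k [e [phi g]]]] /=.
  by have := @alaw A m (interpQ v q'); move=> /= ->.
by rewrite interpQ_cls interp_algfill.
Qed.

Lemma ext_uniq (A : alg) (v : nt X (acar A)) (h : nt MX (acar A)) :
  Talg_hom algX (aop A) h -> nt_eq (ntcomp h unitX) v -> nt_eq h (ext v).
Proof.
move=> Hh Hu.
suff H : forall m t, good t -> forall (Ht : good t),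
    h m (qcls (@RG m) (exist _ t Ht)) = interp v t.
  by move=> m q; case: (qsurj q) => [[t Ht] ->]; rewrite H //= interpQ_cls.
move=> m t Ht; elim: Ht => [m0 x|m0 k e args g Ha IH Hn] Ht.
  by rewrite (proof_irrelevance _ Ht (good_var x)); exact: Hu m0 x.
have natp : forall n n' (f : bhom n n') p,
    qcls (@RG n') (exist _ (args n' (cmap _ f p)) (Ha n' _)) =
    cmap MX f (qcls (@RG n) (exist _ (args n p) (Ha n p))).
  move=> n n' f p; rewrite MX_map; apply: qcls_eq => B w /=.
  rewrite (interp_tmap _ _ (Ha n p)); exact: Hn B w n n' f p.
pose phi : cexp (box k e) MX m0 := @NT _ MX _ natp.
have E : qcls (@RG m0) (exist _ (tfill args g) Ht) = algX m0 (Tinr phi g).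
  rewrite /= (qlift_cls (@algpre_resp _)) /=; apply: qcls_eq => B w.
  rewrite interp_algfill (interp_fill _ (Hn B w)).
  by congr (aop B m0 (Tinr _ g)); apply: nt_ext => m' p /=; rewrite interpQ_cls.
rewrite E (interp_fill _ (Hn A v)); have := Hh m0 (Tinr phi g); move=> /= ->.
rewrite /Tinr qmap_cls /=.
by congr (aop A m0 (Tinr _ g)); apply: nt_ext => m' p /=; apply: IH.
Qed.

End Free.

Lemma ntcompE (X Y Z : cset) (g : nt Y Z) (f : nt X Y) m x :
  ntcomp g f m x = g m (f m x).
Proof. by []. Qed.
Lemma ntidE (X : cset) m (x : X m) : ntid X m x = x.
Proof. by []. Qed.

Definition freeAlg (X : cset) : alg := Alg (@algX_law X).

Lemma hom_id (X : cset) (a : nt (Tob X) X) : Talg_hom a a (ntid X).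
Proof. by move=> m q; change (a m q = a m (Tmap (ntid X) m q)); rewrite (Tmap_id q). Qed.

Lemma hom_comp (X Y Z : cset) (a : nt (Tob X) X) (b : nt (Tob Y) Y) (c : nt (Tob Z) Z)
  (h : nt X Y) (k : nt Y Z) :
  Talg_hom a b h -> Talg_hom b c k -> Talg_hom a c (ntcomp k h).
Proof.
move=> Hh Hk m q.
change (k m (h m (a m q)) = c m (Tmap (ntcomp k h) m q)).
have E1 : h m (a m q) = b m (Tmap h m q) := Hh m q.
have E2 : k m (b m (Tmap h m q)) = c m (Tmap k m (Tmap h m q)) := Hk m _.
have E3 : Tmap (ntcomp k h) m q = Tmap k m (Tmap h m q) := Tmap_comp k h q.
by rewrite E1 E2 E3.
Qed.

Lemma uniq2 (X : cset) (A : alg) (h1 h2 : nt (MX X) (acar A)) :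
  Talg_hom (algX X) (aop A) h1 -> Talg_hom (algX X) (aop A) h2 ->
  (forall m x, h1 m (unitX X m x) = h2 m (unitX X m x)) -> nt_eq h1 h2.
Proof.
move=> H1 H2 Hu m q.
have E2 : nt_eq h2 (ext (A:=A) (ntcomp h2 (unitX X))).
  by apply: ext_uniq.
have E1 : nt_eq h1 (ext (A:=A) (ntcomp h2 (unitX X))).
  by apply: ext_uniq => // n x; rewrite /ntcomp /= Hu.
by rewrite E1 E2.
Qed.

Definition mapM (X Y : cset) (h : nt X Y) : nt (MX X) (MX Y) :=
  ext (A:=freeAlg Y) (ntcomp (unitX Y) h).

Lemma mapM_hom (X Y : cset) (h : nt X Y) : Talg_hom (algX X) (algX Y) (mapM h).
Proof. exact: (ext_hom (A:=freeAlg Y)). Qed.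

Lemma mapM_unit (X Y : cset) (h : nt X Y) m x :
  mapM h m (unitX X m x) = unitX Y m (h m x).
Proof. exact: (ext_unit (A:=freeAlg Y)). Qed.

Definition multM (X : cset) : nt (MX (MX X)) (MX X) :=
  ext (A:=freeAlg X) (ntid (MX X)).

Lemma multM_hom (X : cset) : Talg_hom (algX (MX X)) (algX X) (multM X).
Proof. exact: (ext_hom (A:=freeAlg X)). Qed.

Lemma multM_unit (X : cset) m x : multM X m (unitX (MX X) m x) = x.
Proof. exact: (ext_unit (A:=freeAlg X)). Qed.

Definition Mfun : endofunctor.
Proof.
refine (@Endofunctor MX mapM _ _).
- move=> X; apply: (uniq2 (A:=freeAlg X)); first exact: mapM_hom.
    exact: hom_id.
  by move=> m x; rewrite mapM_unit.
- move=> X Y Z g f; apply: (uniq2 (A:=freeAlg Z)); first exact: mapM_hom.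
    exact: (hom_comp (@mapM_hom _ _ f) (@mapM_hom _ _ g)).
  by move=> m x; rewrite !ntcompE !mapM_unit.
Defined.

Lemma F1E : forall X Y (h : nt X Y), F1 Mfun h = mapM h.
Proof. by []. Qed.

Definition Mmonad : monad.
Proof.
refine (@Monad Mfun unitX multM _ _ _ _ _).
- by move=> X Y h m x; rewrite ?F1E !ntcompE ?F1E; exact: mapM_unit.
- move=> X Y h; apply: (uniq2 (A:=freeAlg Y)).
  + exact: (hom_comp (@multM_hom X) (@mapM_hom _ _ h)).
  + exact: (hom_comp (@mapM_hom _ _ (mapM h)) (@multM_hom Y)).
  + by move=> m x; rewrite ?F1E !ntcompE ?F1E multM_unit mapM_unit multM_unit.
- by move=> X m x; rewrite ?F1E !ntcompE ?F1E multM_unit.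
- move=> X; apply: (uniq2 (A:=freeAlg X)).
  + exact: (hom_comp (@mapM_hom _ _ (unitX X)) (@multM_hom X)).
  + exact: hom_id.
  + by move=> m x; rewrite ?F1E !ntcompE ?F1E mapM_unit multM_unit.
- move=> X; apply: (uniq2 (A:=freeAlg X)).
  + exact: (hom_comp (@mapM_hom _ _ (multM X)) (@multM_hom X)).
  + exact: (hom_comp (@multM_hom (MX X)) (@multM_hom X)).
  + by move=> m x; rewrite ?F1E !ntcompE ?F1E mapM_unit !multM_unit.
Defined.

Lemma TmapC (X Y Z : cset) (g : nt Y Z) (f : nt X Y) m q :
  Tmap (ntcomp g f) m q = Tmap g m (Tmap f m q).
Proof. exact: (Tmap_comp g f q). Qed.
Lemma TmapI (X : cset) m q : Tmap (ntid X) m q = q.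
Proof. exact: (Tmap_id q). Qed.

Definition etaM (X : cset) : nt (Tob X) (MX X) := ntcomp (algX X) (Tmap (unitX X)).

Lemma etaM_nat (X Y : cset) (h : nt X Y) m q :
  etaM Y m (Tmap h m q) = mapM h m (etaM X m q).
Proof.
rewrite /etaM !ntcompE.
have -> : mapM h m (algX X m (Tmap (unitX X) m q))
        = algX Y m (Tmap (mapM h) m (Tmap (unitX X) m q)) := @mapM_hom _ _ h m _.
rewrite -(TmapC (mapM h) (unitX X) q) -(TmapC (unitX Y) h q).
congr (algX Y m _); apply: Tmap_ext => n x; rewrite !ntcompE.
by rewrite mapM_unit.
Qed.

Lemma etaM_t (X : cset) m x : etaM X m (tunit X m x) = unitX X m x.
Proof. by rewrite /etaM ntcompE Tmap_t; apply: (@algX_law X). Qed.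

Lemma alg_mult (X : cset) m q : multM X m (etaM (MX X) m q) = algX X m q.
Proof.
rewrite /etaM ntcompE.
have -> : multM X m (algX (MX X) m (Tmap (unitX (MX X)) m q))
        = algX X m (Tmap (multM X) m (Tmap (unitX (MX X)) m q)) := @multM_hom X m _.
rewrite -(TmapC (multM X) (unitX (MX X)) q).
have -> : Tmap (ntcomp (multM X) (unitX (MX X))) m q = Tmap (ntid _) m q.
  by apply: Tmap_ext => n x; rewrite ntcompE multM_unit.
by rewrite TmapI.
Qed.

Section EM.
Variables (X : cset) (psi : nt (MX X) X).
Hypothesis Hu : forall m x, psi m (unitX X m x) = x.
Hypothesis Ha : forall m x, psi m (mapM psi m x) = psi m (multM X m x).

Lemma EM_talg : Talg (ntcomp psi (etaM X)).
Proof. by move=> m x; change (psi m (etaM X m (tunit X m x)) = x); rewrite etaM_t Hu. Qed.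

Lemma EM_hom : Talg_hom (algX X) (ntcomp psi (etaM X)) psi.
Proof.
move=> m q; change (psi m (algX X m q) = psi m (etaM X m (Tmap psi m q))).
by rewrite -alg_mult -Ha -etaM_nat.
Qed.
End EM.

Theorem proposition3p3 :
  exists (M : monad) (eta : forall X : cset, nt (Tob X) (M X)),
    (forall (X Y : cset) (h : nt X Y),
        nt_eq (ntcomp (eta Y) (Tmap h)) (ntcomp (F1 M h) (eta X))) /\
    (forall X : cset, nt_eq (ntcomp (eta X) (tunit X)) (munit M X)) /\
    comparison_is_iso eta.
Proof.
exists Mmonad, etaM; split; [|split; [|split; [|split]]].
- by move=> X Y h m q; change (etaM Y m (Tmap h m q) = mapM h m (etaM X m q)); rewrite etaM_nat.
- by move=> X m x; change (etaM X m (tunit X m x) = unitX X m x); rewrite etaM_t.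
- move=> X phi Hphi.
  pose A := Alg Hphi.
  exists (ext (A:=A) (ntid X)).
  have Hu : forall m x, ext (A:=A) (ntid X) m (unitX X m x) = x.
    by move=> m x; exact: (ext_unit (A:=A) (ntid X) x).
  split; first split.
  + by move=> m x; rewrite ntcompE Hu.
  + apply: (uniq2 (A:=A)).
    * exact: (hom_comp (@mapM_hom _ _ (ext (A:=A) (ntid X))) (ext_hom (A:=A) (ntid X))).
    * exact: (hom_comp (@multM_hom X) (ext_hom (A:=A) (ntid X))).
    * move=> m x; rewrite !ntcompE.
      change (ext (A:=A) (ntid X) m (mapM (ext (A:=A) (ntid X)) m (unitX (MX X) m x)) =
              ext (A:=A) (ntid X) m (multM X m (unitX (MX X) m x))).
      by rewrite mapM_unit multM_unit Hu.
  + move=> m q.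
    change (ext (A:=A) (ntid X) m (algX X m (Tmap (unitX X) m q)) = phi m q).
    have -> : ext (A:=A) (ntid X) m (algX X m (Tmap (unitX X) m q))
      = phi m (Tmap (ext (A:=A) (ntid X)) m (Tmap (unitX X) m q))
      := ext_hom (A:=A) (ntid X) (Tmap (unitX X) m q).
    rewrite -(TmapC _ (unitX X) q).
    have -> : Tmap (ntcomp (ext (A:=A) (ntid X)) (unitX X)) m q = Tmap (ntid _) m q.
      by apply: Tmap_ext => n x; rewrite ntcompE Hu.
    by rewrite TmapI.
- move=> X psi psi' [Hu Ha] [Hu' Ha'] E.
  have hu : forall m x, psi m (unitX X m x) = x := Hu.
  have ha : forall m x, psi m (mapM psi m x) = psi m (multM X m x) := Ha.
  have hu' : forall m x, psi' m (unitX X m x) = x := Hu'.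
  have ha' : forall m x, psi' m (mapM psi' m x) = psi' m (multM X m x) := Ha'.
  apply: (uniq2 (A:=Alg (EM_talg hu))).
  + exact: (EM_hom ha).
  + move=> m q; change (psi' m (algX X m q) = psi m (etaM X m (Tmap psi' m q))).
    have -> : psi' m (algX X m q) = psi' m (etaM X m (Tmap psi' m q)) := EM_hom ha' q.
    exact: (esym (E m _)).
  + by move=> m x; rewrite hu hu'.
- move=> X Y psi psi' h [Hu Ha] [Hu' Ha'] Hh.
  have hu : forall m x, psi m (unitX X m x) = x := Hu.
  have ha : forall m x, psi m (mapM psi m x) = psi m (multM X m x) := Ha.
  have hu' : forall m x, psi' m (unitX Y m x) = x := Hu'.
  have ha' : forall m x, psi' m (mapM psi' m x) = psi' m (multM Y m x) := Ha'.
  apply: (uniq2 (A:=Alg (EM_talg hu'))).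
  + exact: (hom_comp (EM_hom ha) Hh).
  + exact: (hom_comp (@mapM_hom _ _ h) (EM_hom ha')).
  + move=> m x; change (h m (psi m (unitX X m x)) = psi' m (mapM h m (unitX X m x))).
    by rewrite hu mapM_unit hu'.
Qed.
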